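(* Let $n$ be a positive integer and let $P$ and $Q$ be $3$-good partitions of $[n]$ whose collections of $3$-element parts coincide. Then $P=Q$. In other words, a $3$-good partition of $[n]$ is uniquely determined by $n$ together with the set of its parts of size exactly $3$.
   Context: A partition of $[n]=\{1,\dots,n\}$ into nonempty parts is called $3$-good if every part has at most $3$ elements and the sum of the elements of every part is a power of $3$, i.e. equals $3^s$ for some integer $s\ge 0$. *)

(* Defs.v *)
From mathcomp Require Import all_boot.
Set Implicit Arguments. Unset Strict Implicit. Unset Printing Implicit Defensive.

(* The ground set [n] = {1,...,n} is represented inside 'I_n.+1 as the
   elements with nonzero value; element x : 'I_n.+1 stands for the integer
   (val x). *)
Definition ground (n : nat) : {set 'I_n.+1} := [set x : 'I_n.+1 | 0 < val x].

Definition part_sum (n : nat) (B : {set 'I_n.+1}) : nat := \sum_(x in B) val x.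

Definition three_good (n : nat) (P : {set {set 'I_n.+1}}) : Prop :=
  partition P (ground n) /\
  forall B, B \in P -> #|B| <= 3 /\ exists s : nat, part_sum B = 3 ^ s.

Definition triples (n : nat) (P : {set {set 'I_n.+1}}) : {set {set 'I_n.+1}} :=
  [set B in P | #|B| == 3].

(* Main.v *)
Require Import Defs.
From mathcomp Require Import all_boot.
From mathcomp Require Import zify.

Lemma pow3_lt {s t} : s < t -> 3 * 3 ^ s <= 3 ^ t.
Proof.
move=> st; rewrite -expnS; by rewrite leq_pexp2l.
Qed.

Lemma pow_sing_pair {x y s t} : 0 < y -> y < x -> x = 3 ^ s -> x + y = 3 ^ t -> False.
Proof.
move=> y0 yx xs xt.
case: (ltngtP s t) => st.
- have := pow3_lt st; lia.
- have := leq_pexp2l (isT : 0 < 3) (ltnW st); lia.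
- subst; lia.
Qed.

Lemma pair_pair {x y y' s t} : 0 < y -> y < x -> 0 < y' -> y' < x ->
  x + y = 3 ^ s -> x + y' = 3 ^ t -> y = y'.
Proof.
move=> y0 yx y0' yx' xs xt.
case: (ltngtP s t) => st.
- have := pow3_lt st; lia.
- have := pow3_lt st; lia.
- subst; lia.
Qed.

Lemma shape {n} {B : {set 'I_n.+1}} {x} : x \in B -> #|B| <= 2 ->
  (forall y, y \in B -> val y <= val x) ->
  B = [set x] \/ exists y, val y < val x /\ B = [set x; y].
Proof.
move=> xB cB le.
have c0 : 0 < #|B| by apply/card_gt0P; exists x.
have : (#|B| == 1) || (#|B| == 2) by lia.
case/orP.
- case/cards1P=> a Ba; left; move: xB; rewrite Ba inE => /eqP ->; done.
- case/cards2P=> a [b [ab Bab]]; right.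
  move: xB; rewrite Bab !inE => /orP [] /eqP xa; subst.
  + exists b; split => //.
    have := le b; rewrite !inE eqxx orbT => /(_ isT).
    rewrite leq_eqVlt => /orP [] // /eqP/val_inj E; by rewrite E eqxx in ab.
  + exists a; split; last by rewrite setUC.
    have := le a; rewrite !inE eqxx => /(_ isT).
    rewrite leq_eqVlt => /orP [] // /eqP/val_inj E; by rewrite E eqxx in ab.
Qed.

Lemma sum_pair n (x y : 'I_n.+1) : x != y -> part_sum [set x; y] = val x + val y.
Proof.
move=> xy; rewrite /part_sum big_setU1 /= ?big_set1 // inE; done.
Qed.

Lemma uniq_small {n} {B1 B2 : {set 'I_n.+1}} {x} :
  x \in B1 -> #|B1| <= 2 -> (forall y, y \in B1 -> 0 < val y <= val x) ->
  (exists s, part_sum B1 = 3 ^ s) ->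
  x \in B2 -> #|B2| <= 2 -> (forall y, y \in B2 -> 0 < val y <= val x) ->
  (exists s, part_sum B2 = 3 ^ s) -> B1 = B2.
Proof.
move=> x1 c1 l1 [s1 e1] x2 c2 l2 [s2 e2].
have := shape x1 c1 (fun y h => proj2 (andP (l1 y h))).
have := shape x2 c2 (fun y h => proj2 (andP (l2 y h))).
have ne : forall y : 'I_n.+1, val y < val x -> x != y.
  by move=> y h; apply/eqP => E; rewrite E ltnn in h.
case=> [E2|[y2 [y2x E2]]]; case=> [E1|[y1 [y1x E1]]]; subst B1 B2 => //.
- exfalso; rewrite sum_pair ?ne // in e1.
  move: e2; rewrite /part_sum big_set1 => e2.
  have := l1 y1; rewrite !inE eqxx orbT => /(_ isT) /andP [h _].
  exact: (pow_sing_pair h y1x e2 e1).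
- exfalso; rewrite sum_pair ?ne // in e2.
  move: e1; rewrite /part_sum big_set1 => e1.
  have := l2 y2; rewrite !inE eqxx orbT => /(_ isT) /andP [h _].
  exact: (pow_sing_pair h y2x e1 e2).
- rewrite sum_pair ?ne // in e1; rewrite sum_pair ?ne // in e2.
  have := l1 y1; rewrite !inE eqxx orbT => /(_ isT) /andP [h1 _].
  have := l2 y2; rewrite !inE eqxx orbT => /(_ isT) /andP [h2 _].
  have := pair_pair h1 y1x h2 y2x e1 e2 => /val_inj ->; done.
Qed.

Lemma down_ind n (C : 'I_n.+1 -> Prop) :
  (forall x, (forall y, val x < val y -> C y) -> C x) -> forall x, C x.
Proof.
move=> H.
suff: forall k x, n - val x <= k -> C x by move=> S x; exact: (S _ x (leqnn _)).
elim=> [|k IH] x hx; apply: H => y xy.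
- exfalso; have : val y < n.+1 := ltn_ord y; lia.
- apply: IH; have : val y < n.+1 := ltn_ord y; lia.
Qed.

Lemma in_cover {n} {P : {set {set 'I_n.+1}}} {B y} : B \in P -> y \in B -> y \in cover P.
Proof. by move=> BP yB; apply/bigcupP; exists B. Qed.

Lemma step n (P Q : {set {set 'I_n.+1}}) x :
  three_good P -> three_good Q -> triples P = triples Q ->
  (forall y, val x < val y -> y \in ground n -> pblock P y = pblock Q y) ->
  x \in ground n -> pblock P x = pblock Q x.
Proof.
move=> [/and3P [/eqP cP tP nP] bP] [/and3P [/eqP cQ tQ nQ] bQ] T IH xg.
have xP : x \in cover P by rewrite cP.
have xQ : x \in cover Q by rewrite cQ.
have BPin := pblock_mem xP; have xBP : x \in pblock P x by rewrite mem_pblock.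
have BQin := pblock_mem xQ; have xBQ : x \in pblock Q x by rewrite mem_pblock.
have [c3P _] := bP _ BPin. have [c3Q _] := bQ _ BQin.
case: (boolP (#|pblock P x| == 3)) => h3P.
  have : pblock P x \in triples Q by rewrite -T inE BPin h3P.
  rewrite inE => /andP [HQ _]; by rewrite (def_pblock tQ HQ xBP).
case: (boolP (#|pblock Q x| == 3)) => h3Q.
  have : pblock Q x \in triples P by rewrite T inE BQin h3Q.
  rewrite inE => /andP [HP _]; by rewrite (def_pblock tP HP xBQ).
case: (boolP [exists y in pblock P x, val x < val y]).
  case/exists_inP=> y yB xy.
  have yg : y \in ground n by rewrite -cP (in_cover BPin yB).
  have := IH y xy yg; rewrite (def_pblock tP BPin yB) => E.
  have yQ : y \in cover Q by rewrite cQ.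
  rewrite E in xBP; by rewrite E (def_pblock tQ (pblock_mem yQ) xBP).
rewrite negb_exists_in => /forall_inP lP.
case: (boolP [exists y in pblock Q x, val x < val y]).
  case/exists_inP=> y yB xy.
  have yg : y \in ground n by rewrite -cQ (in_cover BQin yB).
  have := IH y xy yg; rewrite (def_pblock tQ BQin yB) => E.
  have yP : y \in cover P by rewrite cP.
  rewrite -E in xBQ; by rewrite -E (def_pblock tP (pblock_mem yP) xBQ).
rewrite negb_exists_in => /forall_inP lQ.
apply: (uniq_small xBP _ _ (proj2 (bP _ BPin)) xBQ _ _ (proj2 (bQ _ BQin))).
- by rewrite -ltnS ltn_neqAle h3P c3P.
- move=> y yB; have := lP y yB; have : y \in ground n by rewrite -cP (in_cover BPin yB).
  rewrite inE => a b; rewrite a leqNgt; exact: b.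
- by rewrite -ltnS ltn_neqAle h3Q c3Q.
- move=> y yB; have := lQ y yB; have : y \in ground n by rewrite -cQ (in_cover BQin yB).
  rewrite inE => a b; rewrite a leqNgt; exact: b.
Qed.

Theorem mainTheorem6 (n : nat) (P Q : {set {set 'I_n.+1}}) :
  0 < n -> three_good P -> three_good Q -> triples P = triples Q -> P = Q.
Proof.
move=> _ gP gQ T.
have K : forall x, x \in ground n -> pblock P x = pblock Q x.
  apply: down_ind => x IH; apply: step => // y xy; exact: IH.
have [[/and3P [/eqP cP tP nP] _] [/and3P [/eqP cQ tQ nQ] _]] := (gP, gQ).
apply/setP=> B; apply/idP/idP => HB.
- have : B != set0 by apply: contraNneq nP => <-.
  case/set0Pn=> x xB.
  have xg : x \in ground n by rewrite -cP (in_cover HB xB).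
  rewrite -(def_pblock tP HB xB) K //; apply: pblock_mem; by rewrite cQ.
- have : B != set0 by apply: contraNneq nQ => <-.
  case/set0Pn=> x xB.
  have xg : x \in ground n by rewrite -cQ (in_cover HB xB).
  rewrite -(def_pblock tQ HB xB) -K //; apply: pblock_mem; by rewrite cP.
Qed.
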